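(* Let $X\times G\xrightarrow{\alpha}X$ be a Bourbaki-proper continuous right action of a locally compact Hausdorff group on a Hausdorff space, let $F\subseteq X$ be closed and let $H\trianglelefteq G$ be a closed normal subgroup, with quotient map $\pi\colon X\to X/H$. If $\alpha$ is $F$-proper, then $\pi(F)$ is closed in $X/H$ and the induced action of $G/H$ on $X/H$ is $\pi(F)$-proper.
   Context: For $A,B\subseteq X$ set $\langle A:B\rangle_\alpha:=\{g\in G: Bg\cap A\neq\emptyset\}$ and write $A\perp B$ if it is relatively compact in $G$. The action is Bourbaki-proper if for all $x,x'\in X$ there are neighborhoods $V_x\ni x$, $V_{x'}\ni x'$ with $V_{x'}\perp V_x$. For closed $F$, the action is $F$-proper if for every $x\in X$ there are neighborhoods $V_x\ni x$ and $V_F\supseteq F$ with $V_F\perp V_x$ (analogously for the induced action on $X/H$). *)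

(* Defs.v *)
From HB Require Import structures.
From mathcomp Require Import all_boot all_algebra generic_quotient.
From mathcomp Require Import all_classical topology.

Set Implicit Arguments.
Unset Strict Implicit.
Unset Printing Implicit Defensive.

Local Open Scope classical_set_scope.
Local Open Scope quotient_scope.

Definition relcompact (T : topologicalType) (A : set T) := compact (closure A).

Definition transporter (T K : Type) (act : T -> K -> T) (A B : set T) : set K :=
  [set g | exists2 b, B b & A (act b g)].

Definition perp (T : Type) (K : topologicalType) (act : T -> K -> T)
  (A B : set T) := relcompact (transporter act A B).

Definition nbhs_of_set (T : topologicalType) (F V : set T) :=
  exists2 U, open U & F `<=` U /\ U `<=` V.

Definition bourbaki_proper (T K : topologicalType) (act : T -> K -> T) :=
  forall x x' : T, exists Vx Vx',
    [/\ nbhs x Vx, nbhs x' Vx' & perp act Vx' Vx].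

Definition F_proper (T K : topologicalType) (act : T -> K -> T) (F : set T) :=
  forall x : T, exists Vx VF,
    [/\ nbhs x Vx, nbhs_of_set F VF & perp act VF Vx].

Definition quot_space (T : topologicalType) (e : equiv_rel T) :=
  quotient_topology {eq_quot e}.

(** The induced action of G/H on X/H:  pi(x) . q(g) := pi(x g). *)
Definition induced_action (X G : topologicalType) (eX : equiv_rel X)
  (eG : equiv_rel G) (act : X -> G -> X)
  (u : quot_space eX) (v : quot_space eG) : quot_space eX :=
  \pi_(quot_space eX) (act (repr u) (repr v)).

(* Main.v *)
Require Import Defs.
From HB Require Import structures.
From mathcomp Require Import all_boot all_algebra generic_quotient.
From mathcomp Require Import all_classical topology.
Local Open Scope classical_set_scope.
Local Open Scope quotient_scope.

Lemma cluster_lemma (Y Z : topologicalType) (x : Y) (C : set Z)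
  (S : set Y -> set Z) :
  compact C -> (exists2 W, nbhs x W & S W `<=` C) ->
  (forall W1 W2, W1 `<=` W2 -> S W1 `<=` S W2) ->
  (forall W, nbhs x W -> S W !=set0) ->
  exists2 z, C z & forall W B, nbhs x W -> nbhs z B -> S W `&` B !=set0.
Proof.
move=> cC [W0 W0x SW0] Smono Sne.
have FF : ProperFilter (filter_from (nbhs x) S).
  apply: filter_from_proper; last exact: Sne.
  apply: filter_from_filter; first by exists setT; exact: filterT.
  move=> W1 W2 W1x W2x; exists (W1 `&` W2); first exact: filterI.
  by move=> z Sz; split; apply: (Smono _ _ _ z Sz) => ? [].
have [|z [Cz clz]] := cC _ FF; first by exists W0.
exists z => // W B Wx Bz; apply: clz => //; by exists W.
Qed.

Lemma pair_nbhs (Y Z : topologicalType) (y : Y) (z : Z) (A : set (Y * Z)) :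
  nbhs (y, z) A -> exists W B, [/\ nbhs y W, nbhs z B & forall a b, W a -> B b -> A (a, b)].
Proof.
move=> [[W B] /= [Wy Bz] WBA]; exists W, B; split => // a b Wa Bb.
by apply: WBA; split.
Qed.

Lemma quot_closed (T : topologicalType) (e : equiv_rel T) (D : set (quot_space e)) :
  closed ((\pi_(quot_space e) : T -> quot_space e) @^-1` D) -> closed D.
Proof.
move=> cD; rewrite -openC.
change (open ((\pi_(quot_space e) : T -> quot_space e) @^-1` (~` D))).
by rewrite preimage_setC openC.
Qed.

Lemma quot_open (T : topologicalType) (e : equiv_rel T) (D : set (quot_space e)) :
  open ((\pi_(quot_space e) : T -> quot_space e) @^-1` D) -> open D.
Proof. by []. Qed.

Lemma quot_eq (T : topologicalType) (e : equiv_rel T) (a b : T) :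
  (\pi_(quot_space e) a = \pi_(quot_space e) b :> quot_space e) <-> e a b.
Proof.
split => [h|h].
- by apply/eqmodP. 
- by apply/eqmodP.
Qed.

Theorem lemma2p10
  (X G : topologicalType)
  (mul : G -> G -> G) (inv : G -> G) (one : G)
  (mulA : forall a b c, mul a (mul b c) = mul (mul a b) c)
  (mul1g : forall a, mul one a = a)
  (mulg1 : forall a, mul a one = a)
  (mulVg : forall a, mul (inv a) a = one)
  (mulgV : forall a, mul a (inv a) = one)
  (mul_cont : continuous (fun p : G * G => mul p.1 p.2))
  (inv_cont : continuous inv)
  (G_lc : locally_compact [set: G])
  (G_haus : hausdorff_space G)
  (X_haus : hausdorff_space X)
  (alpha : X -> G -> X)
  (alpha_cont : continuous (fun p : X * G => alpha p.1 p.2))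
  (alpha1 : forall x, alpha x one = x)
  (alphaM : forall x g h, alpha (alpha x g) h = alpha x (mul g h))
  (alpha_bproper : bourbaki_proper alpha)
  (F : set X) (F_closed : closed F)
  (H : set G) (H_closed : closed H)
  (H1 : H one)
  (HM : forall a b, H a -> H b -> H (mul a b))
  (HV : forall a, H a -> H (inv a))
  (H_normal : forall g h, H h -> H (mul (mul g h) (inv g)))
  (eX : equiv_rel X)
  (eX_orbit : forall x y, eX x y <-> exists2 h, H h & y = alpha x h)
  (eG : equiv_rel G)
  (eG_coset : forall g g', eG g g' <-> exists2 h, H h & g' = mul g h)
  (alpha_Fproper : F_proper alpha F) :
  closed ((\pi_(quot_space eX) : X -> quot_space eX) @` F) /\
  F_proper (@induced_action X G eX eG alpha)
    ((\pi_(quot_space eX) : X -> quot_space eX) @` F).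
Proof.
have invK : forall g, inv (inv g) = g.
  move=> g; rewrite -[inv (inv g)]mulg1 -(mulVg g) mulA mulVg mul1g //.
have alpha_r_cont : forall g, continuous (fun z => alpha z g).
  move=> g z N Nn.
  have := alpha_cont (z, g) N Nn => /pair_nbhs [W [B [Wz Bg WB]]].
  apply: filterS Wz => a Wa; exact: WB a g Wa (nbhs_singleton Bg).
have sat_open : forall O, open O ->
    open ((\pi_(quot_space eX) : X -> quot_space eX) @` O).
  move=> O oO; apply: quot_open.
  have -> : (\pi_(quot_space eX) : X -> quot_space eX) @^-1`
      ((\pi_(quot_space eX) : X -> quot_space eX) @` O) =
      \bigcup_(h in H) ((fun z => alpha z (inv h)) @^-1` O).
    apply/seteqP; split => z.
    - move=> [o Oo /quot_eq /eX_orbit [h Hh ->]]; exists h => //=.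
      by rewrite alphaM mulgV alpha1.
    - move=> [h Hh Oz]; exists (alpha z (inv h)) => //.
      by apply/quot_eq/eX_orbit; exists h => //; rewrite alphaM mulVg alpha1.
  apply: bigcup_open => h _; exact: (continuousP _).1 (alpha_r_cont (inv h)) O oO.
split.
  apply: quot_closed => x clx.
  have [Vx [VF [Vxx [U0 oU0 [FU0 U0VF]] pp]]] := alpha_Fproper x.
  pose S (W : set X) := [set k | H k /\ exists2 y, W y & F (alpha y k)].
  have c1 : exists2 W, nbhs x W & S W `<=` closure (transporter alpha VF Vx).
    exists Vx => // k [Hk [y Vy Fy]]; apply: subset_closure; exists y => //.
    exact/U0VF/FU0.
  have c2 : forall W1 W2, W1 `<=` W2 -> S W1 `<=` S W2.
    by move=> W1 W2 sub k [Hk [y Wy Fy]]; split => //; exists y => //; apply: sub.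
  have c3 : forall W, nbhs x W -> S W !=set0.
    move=> W Wx; have [y [[f Ff /quot_eq /eX_orbit [h Hh ->]] Wy]] := clx W Wx.
    exists (inv h); split; first exact: HV.
    by exists (alpha f h) => //; rewrite alphaM mulgV alpha1.
  have [z Cz clz] := @cluster_lemma _ _ x (closure (transporter alpha VF Vx)) S pp c1 c2 c3.
  have Hz : H z.
    apply: H_closed => B Bz; have [k [[Hk _] Bk]] := clz setT B filterT Bz.
    by exists k.
  have Fz : F (alpha x z).
    apply: F_closed => N Nn.
    have := alpha_cont (x, z) N Nn => /pair_nbhs [W [B [Wx Bz WB]]].
    have [k [[Hk [y Wy Fy]] Bk]] := clz W B Wx Bz.
    by exists (alpha y k); split => //; exact: (WB y k).
  exists (alpha x z) => //.
  apply/quot_eq/eX_orbit; exists (inv z); first exact: HV.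
  by rewrite alphaM mulgV alpha1.
move=> u; set x := repr u.
have ux : u = \pi_(quot_space eX) x by rewrite /x reprK.
have [Vx [VF [Vxx [U0 oU0 [FU0 U0VF]] pp]]] := alpha_Fproper x.
exists ((\pi_(quot_space eX) : X -> quot_space eX) @` Vx),
  ((\pi_(quot_space eX) : X -> quot_space eX) @` VF); split.
- move: Vxx; rewrite nbhsE => -[O [oO Ox] OV].
  rewrite nbhsE; exists ((\pi_(quot_space eX) : X -> quot_space eX) @` O).
    by split; [exact: sat_open | rewrite ux; exists x].
  exact: image_subset.
- exists ((\pi_(quot_space eX) : X -> quot_space eX) @` U0); first exact: sat_open.
  by split; apply: image_subset.
rewrite /perp /relcompact.
set K := closure (transporter alpha VF Vx).
have cK : compact K := pp.
have cD : compact ((\pi_(quot_space eG) : G -> quot_space eG) @` K).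
  apply: continuous_compact cK; apply: continuous_subspaceT; exact: (@pi_continuous G {eq_quot eG}).
have clD : closed ((\pi_(quot_space eG) : G -> quot_space eG) @` K).
  apply: quot_closed => y cly.
  pose S (W : set G) := [set k | K k /\ exists2 h, H h & W (mul k h)].
  have c1 : exists2 W, nbhs y W & S W `<=` K.
    by exists setT; [exact: filterT | move=> k []].
  have c2 : forall W1 W2, W1 `<=` W2 -> S W1 `<=` S W2.
    by move=> W1 W2 sub k [Kk [h Hh Wh]]; split => //; exists h => //; apply: sub.
  have c3 : forall W, nbhs y W -> S W !=set0.
    move=> W Wy; have [y' [[k Kk /quot_eq /eG_coset [h Hh ->]] Wy']] := cly W Wy.
    by exists k; split => //; exists h.
  have [z Kz clz] := @cluster_lemma _ _ y K S cK c1 c2 c3.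
  have Hzy : H (mul (inv z) y).
    apply: H_closed => N Nn.
    have := mul_cont (inv z, y) N Nn => /pair_nbhs [W1 [B [W1z By WB]]].
    have W1' : nbhs z (inv @^-1` W1) := inv_cont z W1 W1z.
    have [k [[Kk [h Hh Bkh]] W1k]] := clz B _ By W1'.
    exists h; split => //.
    have := WB (inv k) (mul k h) W1k Bkh => /=.
    by rewrite mulA mulVg mul1g.
  exists z => //; apply/quot_eq/eG_coset; exists (mul (inv z) y) => //.
  by rewrite mulA mulgV mul1g.
apply: (subclosed_compact _ cD); first exact: closed_closure.
move=> q Tq; apply: clD; move: q Tq; apply: closureS => q.
move=> [b [y Vy yb] [v VFv vq]]; subst b.
rewrite /induced_action in vq.
have : eX y (repr (\pi_(quot_space eX) y : quot_space eX)) by apply/quot_eq; rewrite reprK.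
move=> /eX_orbit [h Hh e1].
have : eX (alpha (repr (\pi_(quot_space eX) y : quot_space eX)) (repr q)) v.
  by apply/quot_eq; rewrite vq.
move=> /eX_orbit [h' Hh' e2].
set g := repr q in e2.
exists (mul (mul h g) h').
  apply: subset_closure; exists y => //.
  by move: VFv; rewrite e2 e1 !alphaM mulA.
have -> : q = \pi_(quot_space eG) g by rewrite /g reprK.
apply/quot_eq; rewrite equiv_sym.
apply/eG_coset; exists (mul (mul (mul (inv g) h) g) h').
  apply: HM => //; have := H_normal (inv g) h Hh; by rewrite invK.
by rewrite !mulA mulgV mul1g.
Qed.
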